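(* Let $\mathfrak{H}$ be a Euclidean space and let $(\mathcal{X},\mathsf{S},\gamma,(\Lambda_{a})_{a\in\mathcal{A}})$ be a spectral decomposition system for $\mathfrak{H}$ such that the set $\{\Lambda_a\}_{a\in\mathcal{A}}$ is closed in $\mathscr{L}(\mathcal{X},\mathfrak{H})$. Let $\varphi\colon\mathcal{X}\to[-\infty,+\infty]$ be $\mathsf{S}$-invariant, let $x,y\in\mathcal{X}$, and let $a\in\mathcal{A}$. Then: (i) $y\in\partial_{\mathsf{F}}\varphi(x)$ if and only if $\Lambda_a y\in\partial_{\mathsf{F}}(\varphi\circ\gamma)(\Lambda_a x)$; (ii) if $y\in\partial_{\mathsf{L}}\varphi(x)$, then $\Lambda_a y\in\partial_{\mathsf{L}}(\varphi\circ\gamma)(\Lambda_a x)$.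
   Context: A Euclidean space is a finite-dimensional real Hilbert space; $\mathscr{L}(\mathcal{X},\mathfrak{H})$ carries the operator-norm topology. A spectral decomposition system for a Euclidean space $\mathfrak{H}$ is a tuple $(\mathcal{X},\mathsf{S},\gamma,(\Lambda_a)_{a\in\mathcal{A}})$ where $\mathcal{X}$ is a Euclidean space, $\mathsf{S}$ is a group acting on $\mathcal{X}$ such that each map $x\mapsto \mathsf{s}\cdot x$ is a linear isometry, $\gamma\colon\mathfrak{H}\to\mathcal{X}$ is a mapping, and each $\Lambda_a\colon\mathcal{X}\to\mathfrak{H}$ is a linear isometry, such that: [A] there exists a mapping $\tau\colon\mathcal{X}\to\mathcal{X}$ with $\tau(\mathsf{s}\cdot x)=\tau(x)$ for all $\mathsf{s},x$, $\tau(x)\in\mathsf{S}\cdot x$ for all $x$, and $\gamma\circ\Lambda_a=\tau$ for all $a\in\mathcal{A}$; [B] for every $X\in\mathfrak{H}$ there exists $a\in\mathcal{A}$ with $X=\Lambda_a\gamma(X)$; [C] $\langle X,Y\rangle\le\langle\gamma(X),\gamma(Y)\rangle$ for all $X,Y\in\mathfrak{H}$. A function $\varphi$ on $\mathcal{X}$ is $\mathsf{S}$-invariant if $\varphi(\mathsf{s}\cdot x)=\varphi(x)$ for all $\mathsf{s},x$. For $f\colon\mathcal{H}\to[-\infty,+\infty]$: $\partial_{\mathsf{F}}f(x)=\{y:\liminf_{z\to x,z\ne x}(f(z)-f(x)-\langle z-x,y\rangle)/\|z-x\|\ge0\}$ if $f(x)\in\mathbb{R}$, $\varnothing$ otherwise;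 $\partial_{\mathsf{L}}f(x)$, for $f(x)\in\mathbb{R}$, is the set of $y$ for which there exist $x_n\to x$ with $f(x_n)\to f(x)$ and $y_n\to y$ with $y_n\in\partial_{\mathsf{F}}f(x_n)$, and is $\varnothing$ if $f(x)\in\{\pm\infty\}$. *)

(* Defs.v *)
From HB Require Import structures.
From mathcomp Require Import all_boot all_order all_algebra.
From mathcomp Require Import all_classical all_reals all_analysis.
Set Implicit Arguments. Unset Strict Implicit. Unset Printing Implicit Defensive.
Import Order.TTheory GRing.Theory Num.Theory.
Import numFieldNormedType.Exports.
Local Open Scope classical_set_scope.
Local Open Scope ring_scope.

(* A Euclidean space of dimension k is modelled as 'rV[R]_k with the standard
   inner product; the topology is the (product) topology of matrices, which
   coincides with the Euclidean one (finite dimension). *)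
Definition dotv (R : realType) (k : nat) (u v : 'rV[R]_k) : R := (u *m v^T) 0 0.
Definition enorm (R : realType) (k : nat) (u : 'rV[R]_k) : R := Num.sqrt (dotv u u).

Record isometric_group_action (R : realType) (m : nat) := IsoGroupAction {
  gS : Type;
  gmul : gS -> gS -> gS;
  gone : gS;
  ginv : gS -> gS;
  gmulA : forall s t u, gmul s (gmul t u) = gmul (gmul s t) u;
  gmul1 : forall s, gmul gone s = s;
  gmulV : forall s, gmul (ginv s) s = gone;
  gact : gS -> 'rV[R]_m -> 'rV[R]_m;
  gact1 : forall x, gact gone x = x;
  gactM : forall s t x, gact (gmul s t) x = gact s (gact t x);
  gact_linear : forall s (c : R) u v, gact s (c *: u + v) = c *: gact s u + gact s v;
  gact_isometry : forall s u, enorm (gact s u) = enorm u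
}.
Arguments gS {R m}.
Arguments gact {R m} _ _ _.

(* Spectral decomposition system (X = 'rV_m, S acting via G, gamma, Lambda_a
   represented by matrices acting on row vectors: Lambda_a x = x *m Lam a). *)
Definition spectral_decomposition_system (R : realType) (n m : nat)
  (G : isometric_group_action R m) (gamma : 'rV[R]_n -> 'rV[R]_m)
  (A : Type) (Lam : A -> 'M[R]_(m, n)) : Prop :=
  (forall a x, enorm (x *m Lam a) = enorm x) /\
  (exists tau : 'rV[R]_m -> 'rV[R]_m,
      (forall s x, tau (gact G s x) = tau x) /\
      (forall x, exists s, tau x = gact G s x) /\
      (forall a x, gamma (x *m Lam a) = tau x)) /\
  (forall X : 'rV[R]_n, exists a, X = gamma X *m Lam a) /\
  (forall X Y : 'rV[R]_n, dotv X Y <= dotv (gamma X) (gamma Y)).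

Definition S_invariant (R : realType) (m : nat) (G : isometric_group_action R m)
  (phi : 'rV[R]_m -> \bar R) : Prop :=
  forall s x, phi (gact G s x) = phi x.

Definition frechet_subdiff (R : realType) (k : nat) (f : 'rV[R]_k -> \bar R)
  (x : 'rV[R]_k) : set 'rV[R]_k :=
  [set y | f x \is a fin_num /\
     (0 <= limf_einf
        (fun z => (f z - f x - (dotv (z - x) y)%:E) * ((enorm (z - x))^-1)%:E)
        x^')%E].

Definition limiting_subdiff (R : realType) (k : nat) (f : 'rV[R]_k -> \bar R)
  (x : 'rV[R]_k) : set 'rV[R]_k :=
  [set y | f x \is a fin_num /\
     exists (xs ys : nat -> 'rV[R]_k),
       xs @ \oo --> x /\ (f \o xs) @ \oo --> f x /\ ys @ \oo --> y /\
       (forall i, frechet_subdiff f (xs i) (ys i))].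

(* Main.v *)
Require Import Defs.
From HB Require Import structures.
From mathcomp Require Import all_boot all_order all_algebra.
From mathcomp Require Import all_classical all_reals all_analysis.
From mathcomp Require Import ring lra.
Import Order.TTheory GRing.Theory Num.Theory.
Import numFieldNormedType.Exports.
Local Open Scope classical_set_scope.
Local Open Scope ring_scope.

Section Helpers.
Context {R : realType}.

Lemma dotvE {k} (u v : 'rV[R]_k) : dotv u v = \sum_j u 0 j * v 0 j.
Proof. by rewrite /dotv !mxE; apply: eq_bigr => j _; rewrite mxE. Qed.

Lemma dotvC {k} (u v : 'rV[R]_k) : dotv u v = dotv v u.
Proof. by rewrite !dotvE; apply: eq_bigr => j _; rewrite mulrC. Qed.

Lemma dotvBl {k} (u v w : 'rV[R]_k) : dotv (u - v) w = dotv u w - dotv v w.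
Proof. by rewrite !dotvE -sumrB; apply: eq_bigr => j _; rewrite !mxE; ring. Qed.

Lemma dotvDl {k} (u v w : 'rV[R]_k) : dotv (u + v) w = dotv u w + dotv v w.
Proof. by rewrite !dotvE -big_split; apply: eq_bigr => j _; rewrite !mxE mulrDl. Qed.

Lemma dotvZl {k} c (u w : 'rV[R]_k) : dotv (c *: u) w = c * dotv u w.
Proof. by rewrite !dotvE mulr_sumr; apply: eq_bigr => j _; rewrite !mxE mulrA. Qed.

Lemma dotvBr {k} (u v w : 'rV[R]_k) : dotv w (u - v) = dotv w u - dotv w v.
Proof. by rewrite dotvC dotvBl; congr (_ - _); exact: dotvC. Qed.

Lemma dotvDr {k} (u v w : 'rV[R]_k) : dotv w (u + v) = dotv w u + dotv w v.
Proof. by rewrite dotvC dotvDl; congr (_ + _); exact: dotvC. Qed.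

Lemma dotvZr {k} c (u w : 'rV[R]_k) : dotv w (c *: u) = c * dotv w u.
Proof. by rewrite dotvC dotvZl dotvC. Qed.

Lemma dotvv_ge0 {k} (u : 'rV[R]_k) : 0 <= dotv u u.
Proof. by rewrite dotvE sumr_ge0 // => j _; rewrite -expr2 sqr_ge0. Qed.

Lemma enorm_sq {k} (u : 'rV[R]_k) : enorm u ^+ 2 = dotv u u.
Proof. by rewrite /enorm sqr_sqrtr // dotvv_ge0. Qed.

Lemma enorm_ge0 {k} (u : 'rV[R]_k) : 0 <= enorm u.
Proof. exact: sqrtr_ge0. Qed.

Lemma coord_le_enorm {k} (u : 'rV[R]_k) j : `|u 0 j| <= enorm u.
Proof.
rewrite -sqrtr_sqr /enorm ler_sqrt ?dotvv_ge0 // dotvE (bigD1 j) //= -expr2.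
by rewrite lerDl sumr_ge0 // => i _; rewrite -expr2 sqr_ge0.
Qed.

Lemma coord_le_mxnorm {k} (u : 'rV[R]_k) j : `|u 0 j| <= `|u|.
Proof.
rewrite [leRHS]/Num.Def.normr /= mx_normrE; apply/bigmax_geP; right => /=.
by exists (0, j).
Qed.

Lemma mxnorm_le_enorm {k} (u : 'rV[R]_k) : `|u| <= enorm u.
Proof.
rewrite [leLHS]/Num.Def.normr /= mx_normrE; apply: bigmax_le; first exact: enorm_ge0.
by move=> [i j] _ /=; rewrite (ord1 i) coord_le_enorm.
Qed.

Lemma enorm_le_mx {k} (u : 'rV[R]_k) : enorm u <= k.+1%:R * `|u|.
Proof.
have h0 : 0 <= k.+1%:R * `|u| by rewrite mulr_ge0.
rewrite -(ger0_norm h0) -sqrtr_sqr /enorm ler_sqrt ?sqr_ge0 // dotvE.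
apply: (@le_trans _ _ (\sum_(j < k) `|u|^+2)).
  apply: ler_sum => j _; have := coord_le_mxnorm u j.
  have := normr_ge0 (u 0 j); rewrite -[u 0 j * u 0 j]expr2 -real_normK ?num_real //.
  by move=> h1 h2; rewrite -[`|u 0 j|]/(_ : R); nra.
rewrite sumr_const card_ord -mulr_natl -natr1.
have := normr_ge0 u; have : (0 <= k%:R :> R) by [].
set a := k%:R; set b := `|u|  => ha hb.
rewrite exprMn; nra.
Qed.

End Helpers.

Section Helpers2.
Context {R : realType}.

Lemma enorm_eq0 k (u : 'rV[R]_k) : enorm u = 0 -> u = 0.
Proof.
move=> h; apply/rowP => j; rewrite mxE; apply/normr0_eq0; apply/le_anti.
by rewrite normr_ge0 andbT -h coord_le_enorm.
Qed.

Lemma near_enorm {k} (x0 : 'rV[R]_k) d : 0 < d -> \forall z \near x0, enorm (z - x0) < d.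
Proof.
move=> d0; apply/nbhs_ballP; exists (d / k.+1%:R); first by rewrite /= divr_gt0.
move=> z; rewrite -ball_normE /= distrC => hz.
apply: (le_lt_trans (enorm_le_mx _)).
have -> : d = k.+1%:R * (d / k.+1%:R) by rewrite mulrC divfK.
by rewrite ltr_pM2l.
Qed.

Lemma nbhs_enorm {k} (x0 : 'rV[R]_k) (P : 'rV[R]_k -> Prop) :
  (\forall z \near x0, P z) -> exists2 d, 0 < d & forall z, enorm (z - x0) < d -> P z.
Proof.
move=> /nbhs_ballP [e e0 he]; exists e => // z hz; apply: he.
rewrite -ball_normE /= distrC.
exact: le_lt_trans (mxnorm_le_enorm _) hz.
Qed.

Lemma einf_ge0P {T : choiceType} {X : filteredType T} (F : set_system X) {FF : Filter F} (q : X -> \bar R) :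
  (0 <= limf_einf q F)%E <->
  (forall e : R, 0 < e -> F [set z | ((-e)%:E <= q z)%E]).
Proof.
rewrite limf_einfE; split.
- move=> h e e0.
  have : ((-e)%:E < ereal_sup [set ereal_inf (q @` V) | V in F])%E.
    by apply: lt_le_trans h; rewrite lte_fin oppr_lt0.
  move=> /ereal_sup_gt [_ [V FV <-] hV].
  apply: filterS FV => z Vz /=; apply/ltW/(lt_le_trans hV).
  by apply: ereal_inf_lbound; exists z.
- move=> h; apply/lee_subgt0Pr => e e0; rewrite sub0e.
  have hS : [set ereal_inf (q @` V) | V in F]
              (ereal_inf (q @` [set z | ((-e)%:E <= q z)%E])).
    by exists [set z | ((-e)%:E <= q z)%E] => //; exact: h.
  apply: le_trans (ereal_sup_ubound hS).
  by apply: le_ereal_inf_tmp => _ [z hz <-]; exact: hz.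
Qed.

Lemma cvg_enormP {k} (u : nat -> 'rV[R]_k) (x0 : 'rV[R]_k) :
  u @ \oo --> x0 <-> forall d, 0 < d -> \forall i \near \oo, enorm (u i - x0) < d.
Proof.
split.
- by move=> hu d d0; exact: (hu _ (near_enorm x0 d d0)).
- move=> h P /nbhs_enorm [d d0 hd]; apply: filterS (h d d0) => i; exact: hd.
Qed.

Lemma quot_geP {fz : \bar R} {fx c e r : R} : 0 < r ->
  ((-e)%:E <= (fz - fx%:E - c%:E) * (r^-1)%:E)%E <-> ((fx + c - e * r)%:E <= fz)%E.
Proof.
move=> r0; have ri : 0 < r^-1 by rewrite invr_gt0.
case: fz => [t| |] /=.
- rewrite -!EFinB -EFinM !lee_fin ler_pdivlMr //.
  by split => h; nra.
- by rewrite gt0_mulye ?lte_fin // !leey.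
- by rewrite gt0_mulNye ?lte_fin //; split => //.
Qed.

End Helpers2.

Section Helpers3.
Context {R : realType}.

Lemma dotv0l {k} (v : 'rV[R]_k) : dotv 0 v = 0.
Proof. by rewrite dotvE big1 // => j _; rewrite mxE mul0r. Qed.

Lemma enorm0 {k} : enorm (0 : 'rV[R]_k) = 0.
Proof. by rewrite /enorm dotv0l sqrtr0. Qed.

Lemma enorm_gt0 {k} (u : 'rV[R]_k) : u != 0 -> 0 < enorm u.
Proof.
move=> u0; rewrite lt_neqAle enorm_ge0 andbT eq_sym; apply/eqP => /enorm_eq0 h.
by rewrite h eqxx in u0.
Qed.

Lemma frechetP {k} (f : 'rV[R]_k -> \bar R) x0 y0 :
  frechet_subdiff f x0 y0 <-> f x0 \is a fin_num /\
   forall e, 0 < e -> exists2 d, 0 < d & forall z, enorm (z - x0) < d ->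
     ((fine (f x0) + dotv (z - x0) y0 - e * enorm (z - x0))%:E <= f z)%E.
Proof.
rewrite /frechet_subdiff /=; split => -[hfin h]; split => //.
- move/einf_ge0P: h => h e e0; have := h e e0.
  move=> /nbhs_enorm [d d0 hd]; exists d => // z hz.
  have [->|zx] := eqVneq z x0.
    by rewrite subrr dotv0l enorm0 mulr0 addr0 subr0 fineK.
  have hr : 0 < enorm (z - x0) by apply: enorm_gt0; rewrite subr_eq0.
  by have := hd z hz zx; rewrite /= -[f x0]fineK // => /(quot_geP hr).
- apply/einf_ge0P => e e0; have [d d0 hd] := h e e0.
  have := near_enorm x0 d d0; apply: filterS => z hz zx /=.
  have hr : 0 < enorm (z - x0) by apply: enorm_gt0; rewrite subr_eq0.
  by rewrite -[f x0]fineK //; apply/(quot_geP hr); exact: hd.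
Qed.

Lemma iso_dot {p q} (f : 'rV[R]_p -> 'rV[R]_q) :
  (forall u v, f (u + v) = f u + f v) -> (forall u, enorm (f u) = enorm u) ->
  forall u v, dotv (f u) (f v) = dotv u v.
Proof.
move=> fD fN u v.
have hsq w : dotv (f w) (f w) = dotv w w by rewrite -!enorm_sq fN.
have ex (a b : 'rV[R]_p) : dotv (a + b) (a + b) = dotv a a + dotv b b + 2 * dotv a b.
  by rewrite !dotvDl !dotvDr (dotvC b a); ring.
have ex' (a b : 'rV[R]_q) : dotv (a + b) (a + b) = dotv a a + dotv b b + 2 * dotv a b.
  by rewrite !dotvDl !dotvDr (dotvC b a); ring.
have := hsq (u + v); rewrite fD ex ex' !hsq => h.
have : 2 * dotv (f u) (f v) = 2 * dotv u v by lra.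
by move/(congr1 (fun t => t / 2)); rewrite !(mulrC 2) !mulfK.
Qed.

End Helpers3.

Section Main.
Context {R : realType} {n m : nat} (G : isometric_group_action R m)
  (gamma : 'rV[R]_n -> 'rV[R]_m) (A : Type) (Lam : A -> 'M[R]_(m, n))
  (Hsds : spectral_decomposition_system G gamma Lam)
  (phi : 'rV[R]_m -> \bar R) (Hinv : S_invariant G phi).

Lemma dotL b (u v : 'rV[R]_m) : dotv (u *m Lam b) (v *m Lam b) = dotv u v.
Proof.
apply: (iso_dot (fun w : 'rV[R]_m => w *m Lam b)); first by move=> ? ?; rewrite mulmxDl.
by move=> w; case: Hsds => h _; exact: h.
Qed.

Lemma dotG s (u v : 'rV[R]_m) : dotv (gact G s u) (gact G s v) = dotv u v.
Proof.
apply: (iso_dot (gact G s)); first by move=> a c; have := gact_linear s 1 a c; rewrite !scale1r.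
exact: gact_isometry.
Qed.

Lemma gact_inv t (v : 'rV[R]_m) : gact G (ginv t) (gact G t v) = v.
Proof. by rewrite -gactM gmulV gact1. Qed.

Lemma gamma_dot (Z : 'rV[R]_n) : dotv (gamma Z) (gamma Z) = dotv Z Z.
Proof.
case: Hsds => _ [_ [hB _]]; have [b hb] := hB Z; rewrite [in RHS]hb.
by rewrite dotL.
Qed.

Lemma phi_gamma_Lam b (v : 'rV[R]_m) : phi (gamma (v *m Lam b)) = phi v.
Proof.
case: Hsds => _ [[tau [_ [horb hg]]] _].
by rewrite hg; have [s ->] := horb v; exact: Hinv.
Qed.

Lemma frechet_bwd x y a :
  frechet_subdiff (phi \o gamma) (x *m Lam a) (y *m Lam a) ->
  frechet_subdiff phi x y.
Proof.
move=> /frechetP [hfin h]; apply/frechetP.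
move: hfin h; rewrite /= phi_gamma_Lam => hfin h; split => // e e0.
have [d d0 hd] := h e e0; exists d => // z hz.
have := hd (z *m Lam a); rewrite /= phi_gamma_Lam -mulmxBl.
have hn : enorm ((z - x) *m Lam a) = enorm (z - x).
  by rewrite /enorm dotL.
by rewrite hn dotL; apply.
Qed.


Lemma frechet_fwd x y a :
  frechet_subdiff phi x y ->
  frechet_subdiff (phi \o gamma) (x *m Lam a) (y *m Lam a).
Proof.
move=> /frechetP [hfin h]; apply/frechetP.
rewrite /= phi_gamma_Lam; split => // e e0.
have [d d0 hd] := h e e0.
case: Hsds => _ [[tau [_ [horb hg]]] [_ hC]].
set X := x *m Lam a; set Y := y *m Lam a.
set fx := fine (phi x).
set xx := dotv x x; set yy := dotv y y.
have xx0 : 0 <= xx := dotvv_ge0 x.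
have yy0 : 0 <= yy := dotvv_ge0 y.
set K := 2 + 2 * xx + yy.
have K0 : 0 < K by rewrite /K; lra.
have eK : 0 < e + 2 * K by lra.
exists (Num.min 1 (e * d ^+ 2 / (e + 2 * K))).
  by rewrite lt_min ltr01 /= divr_gt0 // mulr_gt0 // exprn_gt0.
move=> Z hZ.
set r := enorm (Z - X).
have [r1 rd] : r < 1 /\ r < e * d ^+ 2 / (e + 2 * K).
  by move: hZ; rewrite lt_min => /andP[].
have [ZX|ZXn] := eqVneq Z X.
  by rewrite /r ZX subrr dotv0l enorm0 mulr0 addr0 subr0 /= /X phi_gamma_Lam /fx fineK.
have r0 : 0 < r by apply: enorm_gt0; rewrite subr_eq0.
set lam := r / e.
set z := gamma Z.
set v := x + lam *: y.
have [t ht] := horb v.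
set w := gact G (ginv t) z.
have hCv := hC Z (v *m Lam a).
rewrite hg ht in hCv.
have e1 : dotv z (gact G t v) = dotv w v.
  by rewrite /w -(dotG (ginv t) z (gact G t v)) gact_inv.
rewrite e1 /v mulmxDl -scalemxAl -/X -/Y !dotvDr !dotvZr in hCv.
have hC' : e * dotv Z X + r * dotv Z Y <= e * dotv w x + r * dotv w y.
  have le : e * r / e = r by rewrite mulrAC divff ?mul1r // gt_eqF.
  by have := hCv; rewrite -(ler_pM2l e0) !mulrDr !mulrA le.
have ww : dotv w w = dotv Z Z by rewrite /w dotG /z gamma_dot.
have XX : dotv X X = xx by rewrite /X dotL.
have XY : dotv X Y = dotv x y by rewrite /X /Y dotL.
have YY : dotv Y Y = yy by rewrite /Y dotL.
have r2 : r ^+ 2 = dotv Z Z - 2 * dotv Z X + xx.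
  by rewrite /r enorm_sq dotvBl !dotvBr (dotvC X Z) XX; ring.
set s := enorm (w - x).
have s0 : 0 <= s := enorm_ge0 _.
have s2 : s ^+ 2 = dotv Z Z - 2 * dotv w x + xx.
  by rewrite /s enorm_sq dotvBl !dotvBr (dotvC x w) ww /xx; ring.
have b1 : 0 <= dotv Z Z - 2 * dotv w y + yy.
  have := dotvv_ge0 (w - y); rewrite dotvBl !dotvBr (dotvC y w) ww -/yy.
  by move=> hh; lra.
have b2 : 0 <= dotv Z Z + 2 * dotv Z Y + yy.
  have := dotvv_ge0 (Z + Y); rewrite dotvDl !dotvDr (dotvC Y Z) YY.
  by move=> hh; lra.
have b3 : 0 <= dotv Z Z - 4 * dotv Z X + 4 * xx.
  have := dotvv_ge0 (Z - 2 *: X); rewrite dotvBl !dotvBr !dotvZl !dotvZr (dotvC X Z) XX.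
  by move=> hh; lra.
have hr2 : r ^+ 2 <= r by rewrite expr2; nra.
have hW : dotv w y - dotv Z Y <= K by rewrite /K; lra.
have hrW : r * (dotv w y - dotv Z Y) <= r * K by rewrite ler_pM2l.
have her : e * r ^+ 2 <= e * r by rewrite ler_pM2l.
have rd' : r * (e + 2 * K) < e * d ^+ 2 by rewrite -ltr_pdivlMr.
have er2 : e * r ^+ 2 = e * (dotv Z Z - 2 * dotv Z X + xx) by rewrite r2.
have es2 : e * s ^+ 2 = e * (dotv Z Z - 2 * dotv w x + xx) by rewrite s2.
have hs2 : e * s ^+ 2 < e * d ^+ 2 by lra.
have sd : s < d.
  rewrite ltr_pM2l // in hs2.
  by rewrite -(ltr_pXn2r (n := 2)) // ?nnegrE // ltW.
have hdw := hd w sd.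
have phw : phi w = phi z by rewrite /w Hinv.
rewrite phw in hdw.
apply: le_trans hdw; rewrite lee_fin.
have hq := mulr_ge0 (ltW e0) (sqr_ge0 (r - s)).
have h1 : r * (dotv Z Y - dotv w y) <= r * (e * (r - s)) by lra.
rewrite ler_pM2l // in h1.
by rewrite !dotvBl XY -/fx -/s; lra.
Qed.

Lemma limiting_fwd x y a :
  limiting_subdiff phi x y ->
  limiting_subdiff (phi \o gamma) (x *m Lam a) (y *m Lam a).
Proof.
move=> [hfin [xs [ys [hx [hf [hy hF]]]]]].
split; first by rewrite /= phi_gamma_Lam.
exists (fun i => xs i *m Lam a), (fun i => ys i *m Lam a).
split.
  apply/cvg_enormP => d d0; move/cvg_enormP: hx => /(_ d d0).
  by apply: filterS => i; rewrite -mulmxBl /enorm dotL.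
split.
  have -> : (phi \o gamma) \o (fun i => xs i *m Lam a) = phi \o xs.
    by apply/funext => i /=; rewrite phi_gamma_Lam.
  by rewrite /= phi_gamma_Lam.
split.
  apply/cvg_enormP => d d0; move/cvg_enormP: hy => /(_ d d0).
  by apply: filterS => i; rewrite -mulmxBl /enorm dotL.
by move=> i; apply: frechet_fwd.
Qed.

End Main.

Theorem proposition4p6 (R : realType) (n m : nat)
  (G : isometric_group_action R m) (gamma : 'rV[R]_n -> 'rV[R]_m)
  (A : Type) (Lam : A -> 'M[R]_(m, n))
  (Hsds : spectral_decomposition_system G gamma Lam)
  (Hclosed : closed (range Lam))
  (phi : 'rV[R]_m -> \bar R) (Hinv : S_invariant G phi)
  (x y : 'rV[R]_m) (a : A) :
  (frechet_subdiff phi x y <->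
     frechet_subdiff (phi \o gamma) (x *m Lam a) (y *m Lam a)) /\
  (limiting_subdiff phi x y ->
     limiting_subdiff (phi \o gamma) (x *m Lam a) (y *m Lam a)).
Proof.
split; last exact: (@limiting_fwd R n m G gamma A Lam Hsds phi Hinv x y a).
split; first exact: (@frechet_fwd R n m G gamma A Lam Hsds phi Hinv x y a).
exact: (@frechet_bwd R n m G gamma A Lam Hsds phi Hinv x y a).
Qed.
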